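(* Let $B$ be a skew left brace, $S$ a subbrace and $I$ an ideal of $B$ such that $I$ is an abelian brace and $B=SI=S+I$. Then (1) $I\cap S$ is an ideal of $B$; and (2) $S$ is a maximal subbrace of $B$ if and only if $I/(I\cap S)$ is a chief factor of $B$.
   Context: A skew left brace (brace) is a set $B$ with two group structures $(B,+)$ and $(B,\cdot)$ with $a(b+c)=ab-a+ac$; $\lambda_a(b)=-a+ab$. A subbrace is a subset that is a subgroup of both groups; a maximal subbrace is a proper subbrace not contained in any other proper subbrace. An ideal is a subset that is a normal subgroup of both groups and $\lambda_b$-invariant for all $b$. A brace $I$ is abelian if $xy=x+y=y+x$ for all $x,y\in I$. For ideals $J\subseteq I$ of $B$, $I/J$ is a chief factor of $B$ if $I/J$ is a minimal nonzero ideal of $B/J$ (i.e. $J\ne I$ and no ideal $L$ of $B$ satisfies $J\subsetneq L\subsetneq I$). *)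

(* Defs.v *)
Set Implicit Arguments.

Record skew_brace := SkewBrace {
  carrier :> Type;
  badd : carrier -> carrier -> carrier;
  bopp : carrier -> carrier;
  bzero : carrier;
  bmul : carrier -> carrier -> carrier;
  binv : carrier -> carrier;
  bone : carrier;
  badd_assoc : forall a b c, badd a (badd b c) = badd (badd a b) c;
  badd_0l : forall a, badd bzero a = a;
  badd_0r : forall a, badd a bzero = a;
  badd_Nl : forall a, badd (bopp a) a = bzero;
  badd_Nr : forall a, badd a (bopp a) = bzero;
  bmul_assoc : forall a b c, bmul a (bmul b c) = bmul (bmul a b) c;
  bmul_1l : forall a, bmul bone a = a;
  bmul_1r : forall a, bmul a bone = a;
  bmul_Vl : forall a, bmul (binv a) a = bone;
  bmul_Vr : forall a, bmul a (binv a) = bone;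
  bcompat : forall a b c,
    bmul a (badd b c) = badd (bmul a b) (badd (bopp a) (bmul a c))
}.

Arguments badd {s}. Arguments bopp {s}. Arguments bzero {s}.
Arguments bmul {s}. Arguments binv {s}. Arguments bone {s}.

Section Defs.
Context {B : skew_brace}.

Definition lambda (a b : B) : B := badd (bopp a) (bmul a b).

Definition bsubset (X Y : B -> Prop) : Prop := forall x, X x -> Y x.
Definition bsetI (X Y : B -> Prop) : B -> Prop := fun x => X x /\ Y x.
Definition bsetT : B -> Prop := fun _ => True.

Definition add_subgroup (X : B -> Prop) : Prop :=
  X bzero /\ (forall x y, X x -> X y -> X (badd x y)) /\ (forall x, X x -> X (bopp x)).
Definition mul_subgroup (X : B -> Prop) : Prop :=
  X bone /\ (forall x y, X x -> X y -> X (bmul x y)) /\ (forall x, X x -> X (binv x)).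

Definition is_subbrace (S : B -> Prop) : Prop := add_subgroup S /\ mul_subgroup S.

Definition is_ideal (I : B -> Prop) : Prop :=
  add_subgroup I /\ mul_subgroup I /\
  (forall x b, I x -> I (badd (badd b x) (bopp b))) /\
  (forall x b, I x -> I (bmul (bmul b x) (binv b))) /\
  (forall x b, I x -> I (lambda b x)).

Definition is_maximal_subbrace (S : B -> Prop) : Prop :=
  is_subbrace S /\ ~ bsubset bsetT S /\
  (forall T, is_subbrace T -> bsubset S T -> ~ bsubset bsetT T -> bsubset T S).

Definition abelian_sub (I : B -> Prop) : Prop :=
  forall x y, I x -> I y -> bmul x y = badd x y /\ badd x y = badd y x.

Definition chief_factor (I J : B -> Prop) : Prop :=
  is_ideal I /\ is_ideal J /\ bsubset J I /\ ~ bsubset I J /\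
  (forall L, is_ideal L -> bsubset J L -> bsubset L I -> bsubset L J \/ bsubset I L).

End Defs.

(* Main.v *)
Require Import Defs.
From Stdlib Require Import Classical.

Section H.
Variable B : skew_brace.
Implicit Types a b c x y : B.

Lemma addK a b : badd (bopp a) (badd a b) = b.
Proof. rewrite badd_assoc, badd_Nl, badd_0l; reflexivity. Qed.
Lemma addKV a b : badd a (badd (bopp a) b) = b.
Proof. rewrite badd_assoc, badd_Nr, badd_0l; reflexivity. Qed.
Lemma opp_uniq x y : badd x y = bzero -> y = bopp x.
Proof. intro H. rewrite <- (addK x y), H, badd_0r. reflexivity. Qed.
Lemma opp_add a b : bopp (badd a b) = badd (bopp b) (bopp a).
Proof. symmetry; apply opp_uniq. rewrite <- badd_assoc, addKV, badd_Nr. reflexivity. Qed.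
Lemma opp_opp a : bopp (bopp a) = a.
Proof. symmetry; apply opp_uniq. apply badd_Nl. Qed.
Lemma opp0 : bopp (@bzero B) = bzero.
Proof. symmetry; apply opp_uniq. apply badd_0l. Qed.

Lemma mulK a b : bmul a (bmul (binv a) b) = b.
Proof. rewrite bmul_assoc, bmul_Vr, bmul_1l; reflexivity. Qed.
Lemma mulKV a b : bmul (binv a) (bmul a b) = b.
Proof. rewrite bmul_assoc, bmul_Vl, bmul_1l; reflexivity. Qed.
Lemma inv_uniq x y : bmul x y = bone -> y = binv x.
Proof. intro H. rewrite <- (mulKV x y), H, bmul_1r. reflexivity. Qed.
Lemma inv_mul a b : binv (bmul a b) = bmul (binv b) (binv a).
Proof. symmetry; apply inv_uniq. rewrite <- bmul_assoc, mulK, bmul_Vr. reflexivity. Qed.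
Lemma inv_inv a : binv (binv a) = a.
Proof. symmetry; apply inv_uniq. apply bmul_Vl. Qed.

Lemma mul0 a : bmul a bzero = a.
Proof.
  pose proof (bcompat _ a bzero bzero) as H. rewrite badd_0l in H.
  assert (E : badd (bopp a) (bmul a bzero) = bzero).
  { rewrite <- (addK (bmul a bzero) (badd (bopp a) (bmul a bzero))), <- H, badd_Nl. reflexivity. }
  apply opp_uniq in E. rewrite opp_opp in E. exact E.
Qed.
Lemma one0 : (@bone B) = bzero.
Proof. rewrite <- (mul0 bone), bmul_1l. reflexivity. Qed.

Lemma mul_opp a b : bmul a (bopp b) = badd a (badd (bopp (bmul a b)) a).
Proof.
  pose proof (bcompat _ a b (bopp b)) as H. rewrite badd_Nr, mul0 in H.
  transitivity (badd a (badd (bopp (bmul a b)) (badd (bmul a b) (badd (bopp a) (bmul a (bopp b)))))).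
  - rewrite addK, addKV. reflexivity.
  - rewrite <- H. reflexivity.
Qed.

Lemma add_to_mul (s l : B) : bmul s (lambda (binv s) l) = badd s l.
Proof.
  unfold lambda. rewrite bcompat, mul_opp, bmul_Vr, mulK, one0, opp0, badd_0l.
  repeat rewrite <- badd_assoc. rewrite addKV. reflexivity.
Qed.
Lemma mul_to_add (s l : B) : badd s (lambda s l) = bmul s l.
Proof. unfold lambda. apply addKV. Qed.
End H.

Lemma ideal_inter (B : skew_brace) (S I : B -> Prop) :
  is_subbrace S -> is_ideal I -> abelian_sub I ->
  (forall b : B, exists s i, S s /\ I i /\ b = bmul s i) ->
  (forall b : B, exists s i, S s /\ I i /\ b = badd s i) ->
  is_ideal (bsetI I S).
Proof.
  intros [[S0 [SA SN]] [S1 [SM SV]]] [[I0 [IA IN]] [[I1 [IM IV]] [Inadd [Inmul Ilam]]]] Hab Hm Ha.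
  unfold is_ideal, add_subgroup, mul_subgroup, bsetI.
  split; [|split; [|split; [|split]]].
  - repeat split; intuition.
  - repeat split; intuition.
  - intros x b [Ix Sx]. split; [apply Inadd; exact Ix|].
    destruct (Ha b) as (s & i & Ss & Ii & ->).
    destruct (Hab i x Ii Ix) as [_ Hc].
    rewrite opp_add, <- (badd_assoc _ s i x), Hc.
    repeat rewrite <- badd_assoc. rewrite addKV.
    rewrite badd_assoc. apply SA; [apply SA|apply SN]; assumption.
  - intros x b [Ix Sx]. split; [apply Inmul; exact Ix|].
    destruct (Hm b) as (s & i & Ss & Ii & ->).
    destruct (Hab i x Ii Ix) as [H1 Hc]. destruct (Hab x i Ix Ii) as [H2 _].
    assert (E : bmul i x = bmul x i) by (rewrite H1, H2; exact Hc).
    rewrite inv_mul, <- (bmul_assoc _ s i x), E.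
    repeat rewrite <- bmul_assoc. rewrite mulK.
    rewrite bmul_assoc. apply SM; [apply SM|apply SV]; assumption.
  - intros x b [Ix Sx]. split; [apply Ilam; exact Ix|].
    destruct (Hm b) as (s & i & Ss & Ii & ->).
    destruct (Hab i x Ii Ix) as [H1 _].
    unfold lambda. rewrite <- bmul_assoc, H1, bcompat, addK.
    apply SA; [apply SN|apply SM]; assumption.
Qed.

Lemma sum_subbrace (B : skew_brace) (S L : B -> Prop) :
  is_subbrace S -> is_ideal L ->
  is_subbrace (fun x => exists s l, S s /\ L l /\ x = badd s l).
Proof.
  intros [[S0 [SA SN]] [S1 [SM SV]]] [[L0 [LA LN]] [[L1 [LM LV]] [Lnadd [Lnmul Llam]]]].
  assert (Eq : forall x, (exists s l, S s /\ L l /\ x = badd s l) <->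
                         (exists s l, S s /\ L l /\ x = bmul s l)).
  { intro x; split; intros (s & l & Ss & Ll & ->).
    - exists s, (lambda (binv s) l). repeat split; auto. rewrite add_to_mul. reflexivity.
    - exists s, (lambda s l). repeat split; auto. rewrite mul_to_add. reflexivity. }
  split.
  - split; [|split].
    + exists bzero, bzero. repeat split; auto. rewrite badd_0l; reflexivity.
    + intros x y (s1 & l1 & Ss1 & Ll1 & ->) (s2 & l2 & Ss2 & Ll2 & ->).
      exists (badd s1 s2), (badd (badd (badd (bopp s2) l1) (bopp (bopp s2))) l2).
      repeat split; auto.
      rewrite opp_opp. repeat rewrite <- badd_assoc. rewrite addKV. reflexivity.
    + intros x (s & l & Ss & Ll & ->).
      exists (bopp s), (badd (badd s (bopp l)) (bopp s)).
      repeat split; auto.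
      rewrite opp_add. repeat rewrite <- badd_assoc. rewrite addK. reflexivity.
  - split; [|split].
    + apply Eq. exists bone, bone. repeat split; auto. rewrite bmul_1l; reflexivity.
    + intros x y Hx Hy. apply Eq in Hx. apply Eq in Hy. apply Eq.
      destruct Hx as (s1 & l1 & Ss1 & Ll1 & ->). destruct Hy as (s2 & l2 & Ss2 & Ll2 & ->).
      exists (bmul s1 s2), (bmul (bmul (bmul (binv s2) l1) (binv (binv s2))) l2).
      repeat split; auto.
      rewrite inv_inv. repeat rewrite <- bmul_assoc. rewrite mulK. reflexivity.
    + intros x Hx. apply Eq in Hx. apply Eq.
      destruct Hx as (s & l & Ss & Ll & ->).
      exists (binv s), (bmul (bmul s (binv l)) (binv s)).
      repeat split; auto.
      rewrite inv_mul. repeat rewrite <- bmul_assoc. rewrite mulKV. reflexivity.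
Qed.

Theorem lemma4p10 (B : skew_brace) (S I : B -> Prop) :
  is_subbrace S -> is_ideal I -> abelian_sub I ->
  (forall b : B, exists s i, S s /\ I i /\ b = bmul s i) ->
  (forall b : B, exists s i, S s /\ I i /\ b = badd s i) ->
  is_ideal (bsetI I S) /\
  (is_maximal_subbrace S <-> chief_factor I (bsetI I S)).
Proof.
  intros HS HI Hab Hm Ha.
  pose proof (ideal_inter _ _ _ HS HI Hab Hm Ha) as HJ.
  split; [exact HJ|].
  pose proof HS as [[S0 [SA SN]] [S1 [SM SV]]].
  pose proof HI as [[I0 [IA IN]] [[I1 [IM IV]] _]].
  split.
  - intros [_ [HnS Hmax]].
    split; [exact HI|split; [exact HJ|split; [intros x [Ix _]; exact Ix|split]]].
    + intro HIJ. apply HnS. intros b _.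
      destruct (Ha b) as (s & i & Ss & Ii & ->). apply SA; auto.
      apply (HIJ i Ii).
    + intros L HL HJL HLI.
      pose proof (sum_subbrace _ _ _ HS HL) as HT.
      pose proof HL as [[L0 [LA LN]] _].
      assert (Hsub : bsubset S (fun x => exists s l, S s /\ L l /\ x = badd s l)).
      { intros s Ss. exists s, bzero. repeat split; auto. rewrite badd_0r; reflexivity. }
      destruct (classic (bsubset bsetT (fun x => exists s l, S s /\ L l /\ x = badd s l))) as [H|Hnf].
      * right. intros i Ii.
        destruct (H i Logic.I) as (s & l & Ss & Ll & E).
        assert (Is : I s).
        { assert (s = badd i (bopp l)) as ->.
          { rewrite E, <- badd_assoc, badd_Nr, badd_0r. reflexivity. }
          apply IA; [exact Ii | apply IN, HLI, Ll]. }
        rewrite E. apply LA; auto. apply HJL. split; assumption.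
      * left. pose proof (Hmax _ HT Hsub Hnf) as H. intros l Ll. split; [apply HLI; exact Ll|].
        apply H. exists bzero, l. repeat split; auto. rewrite badd_0l; reflexivity.
  - intros [_ [_ [_ [HnIJ Hch]]]].
    split; [exact HS|split].
    + intro HT. apply HnIJ. intros i Ii. split; auto. apply HT. exact Logic.I.
    + intros T HT HST HnT.
      pose proof HT as [[T0 [TA TN]] [T1 [TM TV]]].
      assert (HL : is_ideal (bsetI I T)).
      { apply ideal_inter; auto.
        - intro b. destruct (Hm b) as (s & i & Ss & Ii & E). exists s, i. auto.
        - intro b. destruct (Ha b) as (s & i & Ss & Ii & E). exists s, i. auto. }
      destruct (Hch _ HL) as [HLJ|HIL].
      * intros x [Ix Sx]. split; auto.
      * intros x [Ix _]; exact Ix.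
      * intros t Tt. destruct (Ha t) as (s & i & Ss & Ii & E).
        assert (Ti : T i).
        { assert (i = badd (bopp s) t) as ->.
          { rewrite E, addK. reflexivity. }
          apply TA; auto. }
        destruct (HLJ i (conj Ii Ti)) as [_ Si].
        rewrite E. apply SA; auto.
      * exfalso. apply HnT. intros b _.
        destruct (Ha b) as (s & i & Ss & Ii & ->).
        apply TA; auto. apply (HIL i Ii).
Qed.
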